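(* Let $t$ be a table with $n$ rows, and fix a predicate such that exactly $pn$ rows of $t$ satisfy it, where $p\in(0,1]$. Draw a sample of $k\ge1$ rows from $t$ uniformly at random with replacement (i.e., $k$ i.i.d. uniform draws), let $\hat X$ be the number of sampled rows satisfying the predicate, and estimate the cardinality by $\mathrm{est}=\frac{n}{k}\hat X$, the true cardinality being $\mathrm{true}=pn$. Let $\sigma^2=p(1-p)$. Then for every $q\ge1$, $$\mathbb{P}(\text{Q-error}\le q)\ \ge\ 1-\Omega-\Psi,$$ where $$\Omega=\min\Bigg(\Big(\frac{e^{q-1}}{q^{q}}\Big)^{pk},\ \exp\Big(-\frac{k(pq-p)^2}{2\sigma^2+2(pq-p)/3}\Big),\ \exp\big(-2p^2(q-1)^2k\big)\Bigg),$$ and, when $pq>1$, $$\Psi=\min\Bigg(\Big(e^{\frac1q-1}q^{\frac1q}\Big)^{pk},\ \exp\Big(-\frac{k(p-p/q)^2}{2\sigma^2+2(p-p/q)/3}\Big),\ \exp\Big(-\frac{2k(pq-1)^2}{q^2}\Big)\Bigg),$$ while, when $pq\le1$, $$\Psi=\min\Bigg(\Big(e^{\frac1q-1}q^{\frac1q}\Big)^{pk},\ \exp\Big(-\frac{k(p-p/q)^2}{2\sigma^2+2(p-p/q)/3}\Big)\Bigg).$$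
   Context: The Q-error of an estimate is $\max\big(\frac{\mathrm{true}'}{\mathrm{est}'},\frac{\mathrm{est}'}{\mathrm{true}'}\big)$, where $\mathrm{est}'=\max(\mathrm{est},1)$ and $\mathrm{true}'=\max(\mathrm{true},1)$ (to avoid division by zero). $\Omega$ bounds the probability of over-estimation ($\mathrm{est}\ge q\cdot\mathrm{true}$) and $\Psi$ the probability of under-estimation ($\mathrm{est}\le \mathrm{true}/q$). *)

(* Defs.v *)
From HB Require Import structures.
From mathcomp Require Import all_boot all_order all_algebra.
From mathcomp Require Import all_classical all_reals.
From mathcomp Require Import sequences exp.
Set Implicit Arguments. Unset Strict Implicit. Unset Printing Implicit Defensive.
Import Order.TTheory GRing.Theory Num.Theory.
Local Open Scope ring_scope.

Section Defs.
Variable R : realType.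

Definition qerror (est tru : R) : R :=
  let est' := Num.max est 1 in
  let tru' := Num.max tru 1 in
  Num.max (tru' / est') (est' / tru').

(* Uniform probability of an event on the sample space of k i.i.d. uniform
   draws of row indices from a table with n rows: a sample is a function
   'I_k -> 'I_n, and all n^k samples are equally likely. *)
Definition sample_prob (n k : nat) (E : pred {ffun 'I_k -> 'I_n}) : R :=
  #|[set s | E s]|%:R / (n ^ k)%:R.

Definition Xhat (T : Type) (n k : nat) (t : 'I_n -> T) (P : pred T)
  (s : {ffun 'I_k -> 'I_n}) : nat :=
  #|[set i : 'I_k | P (t (s i))]|.

Definition estimate (T : Type) (n k : nat) (t : 'I_n -> T) (P : pred T)
  (s : {ffun 'I_k -> 'I_n}) : R :=
  n%:R / k%:R * (Xhat t P s)%:R.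

Definition sigma2 (p : R) : R := p * (1 - p).

Definition Omega (p q : R) (k : nat) : R :=
  Num.min ((expR (q - 1) / q `^ q) `^ (p * k%:R))
   (Num.min (expR (- (k%:R * (p * q - p) ^+ 2)
                     / (2 * sigma2 p + 2 * (p * q - p) / 3)))
            (expR (- (2 * p ^+ 2 * (q - 1) ^+ 2 * k%:R)))).

Definition Psi (p q : R) (k : nat) : R :=
  let a := (expR (q^-1 - 1) * q `^ (q^-1)) `^ (p * k%:R) in
  let b := expR (- (k%:R * (p - p / q) ^+ 2)
                  / (2 * sigma2 p + 2 * (p - p / q) / 3)) in
  if 1 < p * q then
    Num.min a (Num.min b (expR (- (2 * k%:R * (p * q - 1) ^+ 2) / q ^+ 2)))
  else Num.min a b.

End Defs.

(* Main.v *)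
Require Import Defs.
From HB Require Import structures.
From mathcomp Require Import all_boot all_order all_algebra.
From mathcomp Require Import all_classical all_reals.
From mathcomp Require Import sequences exp.
From mathcomp Require Import topology normedtype derive realfun.
Import Order.TTheory GRing.Theory Num.Theory.
Import numFieldNormedType.Exports.
Local Open Scope ring_scope.
From mathcomp Require Import ring lra.

Section S.
Variable R : realType.
Local Open Scope classical_set_scope.

Lemma mono_deriv (f df : R -> R) (a b : R) : a <= b ->
  (forall x : R, is_derive x 1 f (df x)) -> (forall x, a <= x <= b -> 0 <= df x) ->
  f a <= f b.
Proof.
move=> ab H H0.
have cont : {within `[a, b], continuous f}.
  apply: derivable_within_continuous => x _; exact: (@ex_derive _ _ _ _ _ _ _ (H x)).
have [c cab E] := MVT_segment ab (fun x _ => H x) cont.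
rewrite -subr_ge0 E mulr_ge0 // ?subr_ge0 //; apply: H0.
by move: cab; rewrite in_itv /=.
Qed.


Lemma fact_bound (i : nat) : (2 * 3 ^ i <= (i.+2)`!)%N.
Proof.
elim: i => [|i IH] //.
rewrite factS expnS mulnCA.
apply: leq_mul => //.
Qed.

Lemma geom_eq (r : R) (M : nat) : (\sum_(0 <= i < M) r ^+ i) * (1 - r) = 1 - r ^+ M.
Proof.
elim: M => [|M IH]; first by rewrite big_geq // mul0r expr0 subrr.
rewrite big_nat_recr //= mulrDl IH exprS; ring.
Qed.

Lemma geom_le (r : R) (M : nat) : 0 <= r < 1 -> \sum_(0 <= i < M) r ^+ i <= (1 - r)^-1.
Proof.
move=> /andP[r0 r1].
have h : 0 < 1 - r by rewrite subr_gt0.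
rewrite -(ler_pM2r h) mulVf ?gt_eqF // geom_eq.
have := exprn_ge0 M r0; lra.
Qed.

Lemma exp_bern (l z : R) : 0 <= l < 3 -> -1 <= z <= 1 ->
  expR (l * z) <= 1 + l * z + z ^+ 2 * l ^+ 2 / (2 * (1 - l / 3)).
Proof.
move=> /andP[l0 l3] hz.
have hz' : `|z| <= 1 by rewrite ler_norml.
rewrite /expR.
apply: limr_le; first exact: is_cvg_series_exp_coeff.
exists 2%N => // N /= N2.
case: N N2 => [|[|M]] // _.
rewrite /series /=.
rewrite big_nat_recl // big_nat_recl //.
rewrite /exp_coeff /= expr0 expr1 divr1 invr1 mulr1 addrA.
rewrite lerD2l.
set r := l / 3.
have r0 : 0 <= r < 1.
  rewrite /r divr_ge0 //= ltr_pdivrMr //; lra.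
apply: (@le_trans _ _ (\sum_(0 <= i < M) (z ^+ 2 * l ^+ 2 / 2) * r ^+ i)).
  apply: ler_sum => i _.
  have e1 : (l * z) ^+ i.+2 = (l * z) ^+ 2 * (l * z) ^+ i by rewrite -add2n exprD.
  have e2 : (l * z) ^+ i <= l ^+ i.
    apply: le_trans (ler_norm _) _.
    rewrite normrX normrM (ger0_norm l0).
    apply: lerXn2r; rewrite ?nnegrE ?mulr_ge0 //.
    by rewrite -{2}(mulr1 l) ler_wpM2l.
  have e3 : (2 * 3 ^+ i : R) <= (i.+2)`!%:R.
    by have := fact_bound i; rewrite -(ler_nat R) natrM natrX.
  have D0 : (0 : R) < 2 * 3 ^+ i by rewrite mulr_gt0 // exprn_gt0.
  rewrite e1 -mulrA.
  apply: (@le_trans _ _ ((l * z) ^+ 2 * (l ^+ i / (2 * 3 ^+ i)))).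
    apply: ler_wpM2l; first by rewrite sqr_ge0.
    apply: (@le_trans _ _ (l ^+ i / (i.+2)`!%:R)).
      by apply: ler_wpM2r; rewrite ?invr_ge0.
    apply: ler_wpM2l; first by rewrite exprn_ge0.
    by rewrite lef_pV2 ?posrE // (lt_le_trans D0).
  rewrite /r expr_div_n le_eqVlt; apply/orP; left; apply/eqP.
  field; by rewrite expf_neq0 // pnatr_eq0.
rewrite -mulr_sumr invfM mulrA.
rewrite -mulrA.
apply: ler_wpM2l; first by have := sqr_ge0 z; nra.
apply: ler_wpM2l; first by rewrite invr_ge0.
exact: geom_le.
Qed.

Definition AA (p x : R) := 1 - p + p * expR x.

Lemma d_A (p x : R) : is_derive x 1 (AA p) (p * expR x).
Proof.
have h := (is_deriveD (is_derive_cst (1 - p) x 1) (is_deriveZ p (is_derive_expR x))).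
apply: (is_derive_eq h).
by rewrite add0r.
Qed.

Lemma A_gt0 (p x : R) : 0 <= p <= 1 -> 0 < AA p x.
Proof.
move=> /andP[p0 p1]; rewrite /AA.
have e0 := expR_gt0 x.
have [->|pn0] := eqVneq p 0; first by rewrite subr0 mul0r addr0.
have pp : 0 < p by rewrite lt_def pn0.
have : 0 < p * expR x by rewrite mulr_gt0.
lra.
Qed.

Definition F1 (p : R) : R -> R := 4^-1 *: id + (1 - p) *: (fun y => (AA p y)^-1).

Lemma F1E (p x : R) : F1 p x = 4^-1 * x + (1 - p) * (AA p x)^-1.
Proof. by []. Qed.

Lemma F1_ge (p x : R) : 0 <= p <= 1 -> 0 <= x -> 1 - p <= F1 p x.
Proof.
move=> hp x0.
have E : F1 p 0 = 1 - p.
  by rewrite F1E /AA expR0 mulr1 subrK invr1 mulr1 mulr0 add0r.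
pose df := (fun x => 4^-1 * 1 + (1 - p) * (- (AA p x) ^- 2 * (p * expR x))).
have H := @mono_deriv (F1 p) df 0 x x0.
have h1 : forall y : R, is_derive y 1 (F1 p) (df y).
  move=> y.
  have hA : AA p y != 0 by rewrite gt_eqF // A_gt0.
  have h := is_deriveD (is_deriveZ (4^-1) (@is_derive_id _ _ y 1))
     (is_deriveZ (1 - p) (is_deriveV hA (d_A p y))).
  exact: h.
have h2 : forall y : R, 0 <= y <= x -> 0 <= df y.
  move=> y _.
  have Ay := @A_gt0 p y hp.
  have ey := expR_gt0 y.
  case/andP: hp => p0 p1.
  rewrite /df mulr1 mulNr mulrN.
  have -> : (1 - p) * (AA p y ^- 2 * (p * expR y)) = ((1 - p) * (p * expR y)) / (AA p y ^+ 2).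
    by rewrite mulrCA mulrC.
  rewrite subr_ge0 ler_pdivrMr ?exprn_gt0 //.
  rewrite /AA.
  have : 0 <= p * expR y by rewrite mulr_ge0 // ltW.
  move: (p * expR y) => b hb.
  have := sqr_ge0 (1 - p - b). rewrite !expr2. nra.
have := H h1 h2.
by rewrite E.
Qed.

Definition F2 (p : R) : R -> R := 8^-1 *: (id * id) - (@ln R \o AA p) + p *: id.

Lemma F2E (p x : R) : F2 p x = 8^-1 * (x * x) - ln (AA p x) + p * x.
Proof. by []. Qed.

Lemma F2_ge (p x : R) : 0 <= p <= 1 -> 0 <= x -> 0 <= F2 p x.
Proof.
move=> hp x0.
have E : F2 p 0 = 0.
  by rewrite F2E /AA expR0 mulr1 subrK ln1 !mulr0 subrr addr0.
pose df := (fun y : R => 8^-1 * (y * 1 + y * 1) - (AA p y)^-1 * (p * expR y) + p * 1).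
have H := @mono_deriv (F2 p) df 0 x x0.
have h1 : forall y : R, is_derive y 1 (F2 p) (df y).
  move=> y.
  have hA := @A_gt0 p y hp.
  have hl := is_derive1_comp (is_derive1_ln hA) (d_A p y).
  have h := is_deriveD (is_deriveB (is_deriveZ (8^-1) (is_deriveM (@is_derive_id _ _ y 1) (@is_derive_id _ _ y 1))) hl)
     (is_deriveZ p (@is_derive_id _ _ y 1)).
  exact: h.
have h2 : forall y : R, 0 <= y <= x -> 0 <= df y.
  move=> y /andP[y0 _].
  have Ay := @A_gt0 p y hp.
  have F := @F1_ge p y hp y0.
  rewrite F1E in F.
  rewrite /df !mulr1.
  have -> : (AA p y)^-1 * (p * expR y) = 1 - (1 - p) * (AA p y)^-1.
    rewrite /AA in Ay *. field. by rewrite gt_eqF.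
  move: F; move: ((AA p y)^-1) => a.
  lra.
have := H h1 h2.
by rewrite E.
Qed.

Definition G (p l : R) := p * expR (l * (1 - p)) + (1 - p) * expR (- (l * p)).

Lemma hoeffding_lemma (p l : R) : 0 <= p <= 1 -> 0 <= l -> G p l <= expR (l ^+ 2 / 8).
Proof.
move=> hp l0.
have hA := @A_gt0 p l hp.
have -> : G p l = expR (ln (AA p l) - l * p).
  rewrite expRD lnK ?posrE // /G /AA.
  rewrite mulrBr mulr1 expRD; ring.
rewrite ler_expR.
have := @F2_ge p l hp l0; rewrite F2E.
rewrite expr2. lra.
Qed.


Lemma bern_G (p l : R) : 0 <= p <= 1 -> 0 <= l < 3 ->
  G p l <= expR (p * (1 - p) * (l ^+ 2 / (2 * (1 - l / 3)))).
Proof.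
move=> hp hl.
apply: le_trans (expR_ge1Dx _).
have h1 := @exp_bern l (1 - p) hl.
have h2 := @exp_bern l (- p) hl.
case/andP: hp => p0 p1.
have /h1 {}h1 : -1 <= 1 - p <= 1 by apply/andP; split; lra.
have /h2 {}h2 : -1 <= - p <= 1 by apply/andP; split; lra.
rewrite -mulrA in h1; rewrite -mulrA in h2.
move: h1 h2; rewrite /G mulrN.
move: (l ^+ 2 / (2 * (1 - l / 3))) => C h1 h2.
have q0 : 0 <= 1 - p by lra.
have := ler_wpM2l p0 h1.
have := ler_wpM2l q0 h2.
rewrite !sqrrN. nra.
Qed.


Lemma chern_up (p l : R) : G p l <= expR (- (l * p) + p * (expR l - 1)).
Proof.
have -> : G p l = expR (- (l * p)) * (1 + p * (expR l - 1)).
  by rewrite /G mulrBr mulr1 expRD; ring.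
rewrite expRD ler_wpM2l ?expR_ge0 //.
exact: expR_ge1Dx.
Qed.

Lemma chern_lo (p l : R) : G (1 - p) l <= expR (l * p + p * (expR (- l) - 1)).
Proof.
have -> : G (1 - p) l = expR (l * p) * (1 + p * (expR (- l) - 1)).
  rewrite /G.
  have -> : 1 - (1 - p) = p by ring.
  have -> : - (l * (1 - p)) = l * p + - l by ring.
  rewrite expRD; ring.
rewrite expRD ler_wpM2l ?expR_ge0 //.
exact: expR_ge1Dx.
Qed.

Lemma G_triv (p l : R) : p * (1 - p) = 0 -> G p l = 1.
Proof.
move/eqP; rewrite mulf_eq0 => /orP[] /eqP h.
  by rewrite /G h mul0r add0r subr0 mulr0 oppr0 expR0 mulr1.
have -> : p = 1 by lra.
by rewrite /G subrr mulr0 expR0 mul0r addr0 mulr1.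
Qed.

Lemma bern_step (p t : R) : 0 <= p <= 1 -> 0 <= t ->
  exists2 l, 0 <= l & G p l * expR (- (l * t)) <=
     expR (- (t ^+ 2) / (2 * (p * (1 - p)) + 2 * t / 3)).
Proof.
move=> hp t0.
have V0 : 0 <= p * (1 - p) by case/andP: hp => ? ?; rewrite mulr_ge0 // subr_ge0.
have [Vz|Vp] := eqVneq (p * (1 - p)) 0.
  exists (3 / 2); first by rewrite divr_ge0.
  rewrite G_triv // mul1r Vz mulr0 add0r ler_expR.
  have [->|tp] := eqVneq t 0; first by rewrite !mulr0 expr0n /= oppr0 mul0r.
  have tp' : 0 < t by rewrite lt_def tp.
  rewrite le_eqVlt; apply/orP; left; apply/eqP; field.
  by rewrite tp.
have Vp' : 0 < p * (1 - p) by rewrite lt_def Vp.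
move: Vp Vp' V0; set V := p * (1 - p) => Vp Vp' V0.
have D0 : 0 < V + t / 3 by lra.
exists (t / (V + t / 3)); first by rewrite divr_ge0 // ltW.
have l3 : 0 <= t / (V + t / 3) < 3.
  apply/andP; split; first by rewrite divr_ge0 // ltW.
  rewrite ltr_pdivrMr //; lra.
have := @bern_G p _ hp l3.
rewrite -/V => h.
apply: le_trans (ler_wpM2r (expR_ge0 _) h) _.
rewrite -expRD ler_expR le_eqVlt; apply/orP; left; apply/eqP.
field.
apply/and3P; split; try (rewrite gt_eqF //; lra).
Qed.


Lemma G_ge0 (p l : R) : 0 <= p <= 1 -> 0 <= G p l.
Proof.
case/andP=> p0 p1; rewrite /G addr_ge0 // mulr_ge0 ?expR_ge0 ?subr_ge0 //.
Qed.

Lemma hoeff_step (p d : R) : 0 <= p <= 1 -> 0 <= d ->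
  G p (4 * d) * expR (- (4 * d * d)) <= expR (- (2 * d ^+ 2)).
Proof.
move=> hp d0.
have l0 : 0 <= 4 * d by rewrite mulr_ge0.
apply: le_trans (ler_wpM2r (expR_ge0 _) (@hoeffding_lemma p _ hp l0)) _.
rewrite -expRD ler_expR le_eqVlt; apply/orP; left; apply/eqP; by field.
Qed.

Lemma chern_up_step (p q : R) : 1 <= q ->
  G p (ln q) * expR (- (ln q * (p * q - p))) <= expR (p * (q - 1) - p * q * ln q).
Proof.
move=> q1.
have q0 : 0 < q by lra.
apply: le_trans (ler_wpM2r (expR_ge0 _) (chern_up p (ln q))) _.
rewrite -expRD lnK ?posrE // ler_expR le_eqVlt; apply/orP; left; apply/eqP; ring.
Qed.

Lemma chern_lo_step (p q : R) : 1 <= q ->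
  G (1 - p) (ln q) * expR (- (ln q * (p - p / q))) <= expR (p * (q^-1 - 1) + p * q^-1 * ln q).
Proof.
move=> q1.
have q0 : 0 < q by lra.
apply: le_trans (ler_wpM2r (expR_ge0 _) (chern_lo p (ln q))) _.
rewrite -expRD expRN lnK ?posrE // ler_expR le_eqVlt; apply/orP; left; apply/eqP; ring.
Qed.

Lemma powR_pos (a x : R) : 0 < a -> a `^ x = expR (x * ln a).
Proof. by move=> a0; rewrite /powR gt_eqF. Qed.

Lemma omega1E (p q K : R) : 1 <= q ->
  (expR (q - 1) / q `^ q) `^ (p * K) = expR (K * (p * (q - 1) - p * q * ln q)).
Proof.
move=> q1; have q0 : 0 < q by lra.
rewrite (@powR_pos q _ q0) -expRB -expRM.
congr expR; ring.
Qed.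

Lemma psi1E (p q K : R) : 1 <= q ->
  (expR (q^-1 - 1) * q `^ (q^-1)) `^ (p * K) = expR (K * (p * (q^-1 - 1) + p * q^-1 * ln q)).
Proof.
move=> q1; have q0 : 0 < q by lra.
rewrite (@powR_pos q _ q0) -expRD -expRM.
congr expR; ring.
Qed.

End S.

Section C.
Variable R : realType.
Local Notation G := (@G R).

Lemma card_sum (I : finType) (Q : pred I) :
  (#|[set i | Q i]|)%:R = \sum_i ((Q i)%:R : R).
Proof.
rewrite big_mkcond /=.
rewrite (eq_bigr (fun i => if Q i then 1 else 0)); last by move=> i _; case: (Q i).
rewrite -big_mkcond /= sumr_const.
by rewrite cardsE.
Qed.

Lemma sum_prod (n k : nat) (F : 'I_n -> R) :
  \sum_(s : {ffun 'I_k -> 'I_n}) \prod_(i < k) F (s i) = (\sum_j F j) ^+ k.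
Proof.
rewrite -(bigA_distr_bigA (fun (i : 'I_k) j => F j)) /=.
by rewrite prodr_const card_ord.
Qed.

Lemma markov (n k : nat) (w : 'I_n -> R) (c : R) :
  #|[set s : {ffun 'I_k -> 'I_n} | c <= \sum_i w (s i)]|%:R * expR c
    <= (\sum_j expR (w j)) ^+ k.
Proof.
rewrite -sum_prod.
set S := [set s : {ffun 'I_k -> 'I_n} | c <= \sum_i w (s i)].
rewrite mulrC mulr_natr -sumr_const.
apply: (@le_trans _ _ (\sum_(s in S) expR (\sum_i w (s i)))).
  by apply: ler_sum => s; rewrite inE => h; rewrite ler_expR.
rewrite [leRHS](bigID (fun s => s \in S)) /=.
under eq_bigr => s _ do rewrite expR_sum.
rewrite lerDl sumr_ge0 // => s _.
by rewrite prodr_ge0 // => i _; rewrite expR_ge0.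
Qed.

Lemma prob_mono n k (E E' : pred {ffun 'I_k -> 'I_n}) :
  (forall s, E s -> E' s) -> sample_prob R E <= sample_prob R E'.
Proof.
move=> H; rewrite /sample_prob ler_wpM2r ?invr_ge0 // ler_nat.
by apply: subset_leq_card; apply/fintype.subsetP => s; rewrite !inE; apply: H.
Qed.

Lemma tail_bound n k (w : 'I_n -> R) c : (0 < n)%N ->
  sample_prob R (fun s : {ffun 'I_k -> 'I_n} => c <= \sum_i w (s i))
    <= ((\sum_j expR (w j)) / n%:R) ^+ k * expR (- c).
Proof.
move=> n0; rewrite /sample_prob natrX expr_div_n mulrAC.
apply: ler_wpM2r; first by rewrite invr_ge0 exprn_ge0.
rewrite expRN ler_pdivlMr ?expR_gt0 //.
exact: markov.
Qed.

Lemma sum_bin n (b : 'I_n -> bool) (f0 f1 : R) :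
  \sum_j (if b j then f1 else f0) =
  #|[set j | b j]|%:R * f1 + (n%:R - #|[set j | b j]|%:R) * f0.
Proof.
rewrite card_sum.
rewrite (eq_bigr (fun j => (b j)%:R * f1 + (1 - (b j)%:R) * f0)); last first.
  by move=> j _; case: (b j); rewrite /= ?subrr ?subr0 ?mul1r ?mul0r ?addr0 ?add0r.
rewrite big_split /= -!mulr_suml sumrB sumr_const card_ord.
by rewrite -mulr_natl mulr1.
Qed.


Lemma pow_le (k : nat) (a B : R) : 0 <= a -> a <= expR B -> a ^+ k <= expR (k%:R * B).
Proof.
move=> a0 aB; rewrite expRM_natl.
by apply: lerXn2r; rewrite ?nnegrE ?expR_ge0.
Qed.

Lemma up_bound n k (b : 'I_n -> bool) (p d l : R) : (0 < n)%N ->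
  #|[set j | b j]|%:R = p * n%:R -> 0 <= l ->
  sample_prob R (fun s : {ffun 'I_k -> 'I_n} => k%:R * d <= \sum_i ((b (s i))%:R - p))
   <= (G p l * expR (- (l * d))) ^+ k.
Proof.
move=> n0 hm l0.
apply: le_trans (@prob_mono n k _ (fun s => l * (k%:R * d) <= \sum_i (l * ((b (s i))%:R - p))) _) _.
  by move=> s h; rewrite -mulr_sumr; exact: ler_wpM2l.
apply: le_trans (@tail_bound n k (fun j => l * ((b j)%:R - p)) _ n0) _.
rewrite (eq_bigr (fun j => if b j then expR (l * (1 - p)) else expR (- (l * p)))); last first.
  by move=> j _; case: (b j); rewrite // sub0r mulrN.
rewrite sum_bin hm.
have N0 : (n%:R : R) != 0 by rewrite pnatr_eq0 -lt0n.
have -> : (p * n%:R * expR (l * (1 - p)) + (n%:R - p * n%:R) * expR (- (l * p))) / n%:R = G p l.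
  by rewrite /G; field.
have -> : - (l * (k%:R * d)) = k%:R * (- (l * d)) by ring.
by rewrite expRM_natl exprMn.
Qed.

Lemma lo_bound n k (b : 'I_n -> bool) (p d l : R) : (0 < n)%N ->
  #|[set j | b j]|%:R = p * n%:R -> 0 <= l ->
  sample_prob R (fun s : {ffun 'I_k -> 'I_n} => k%:R * d <= \sum_i (p - (b (s i))%:R))
   <= (G (1 - p) l * expR (- (l * d))) ^+ k.
Proof.
move=> n0 hm l0.
apply: le_trans (@prob_mono n k _ (fun s => l * (k%:R * d) <= \sum_i (l * (p - (b (s i))%:R))) _) _.
  by move=> s h; rewrite -mulr_sumr; exact: ler_wpM2l.
apply: le_trans (@tail_bound n k (fun j => l * (p - (b j)%:R)) _ n0) _.
rewrite (eq_bigr (fun j => if b j then expR (- (l * (1 - p))) else expR (l * p))); last first.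
  by move=> j _; case: (b j); rewrite // ?subr0 // -mulrN opprB.
rewrite sum_bin hm.
have N0 : (n%:R : R) != 0 by rewrite pnatr_eq0 -lt0n.
have -> : (p * n%:R * expR (- (l * (1 - p))) + (n%:R - p * n%:R) * expR (l * p)) / n%:R = G (1 - p) l.
  rewrite /G. have -> : 1 - (1 - p) = p by ring.
  by field.
have -> : - (l * (k%:R * d)) = k%:R * (- (l * d)) by ring.
by rewrite expRM_natl exprMn.
Qed.

Lemma qerr_fail (N K x p q : R) : 0 < N -> 0 < K -> 1 <= p * N -> 1 <= q ->
  ~~ (qerror (N / K * x) (p * N) <= q) ->
  K * (p * q - p) <= x - K * p \/ K * (p - p / q) <= K * p - x.
Proof.
move=> N0 K0 pN1 q1; rewrite -ltNge /qerror.
have -> : Num.max (p * N) 1 = p * N by apply/max_idPl.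
set e := N / K * x.
have pN0 : 0 < p * N by lra.
have m1 : 1 <= Num.max e 1 by rewrite le_max lexx orbT.
have me : e <= Num.max e 1 by rewrite le_max lexx.
have m0 : 0 < Num.max e 1 by lra.
have KN : 0 < K / N by rewrite divr_gt0.
rewrite lt_max => /orP [] h.
- right.
  rewrite ltr_pdivlMr // in h.
  have h1 : q * e < p * N.
    apply: le_lt_trans h; apply: ler_wpM2l => //; lra.
  have h2 : q * x < p * K.
    have E1 : q * x = q * e * (K / N) by rewrite /e; field; rewrite !gt_eqF.
    have E2 : p * K = p * N * (K / N) by field; rewrite gt_eqF.
    by rewrite E1 E2 ltr_pM2r.
  have q0 : 0 < q by lra.
  have h3 : x <= p * K / q by rewrite ler_pdivlMr // mulrC ltW.
  have -> : K * (p - p / q) = K * p - p * K / q by field; rewrite gt_eqF.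
  lra.
- left.
  rewrite ltr_pdivlMr // in h.
  have hqpN : 1 <= q * (p * N) by apply: mulr_ege1.
  have e1 : 1 < e.
    move: (h); rewrite /Num.max; case: ifP => [_|]; first lra.
    move=> _ ?; lra.
  have me' : Num.max e 1 = e by apply/max_idPl; lra.
  rewrite me' in h.
  have h2 : q * p * K < x.
    have E1 : x = e * (K / N) by rewrite /e; field; rewrite !gt_eqF.
    have E2 : q * p * K = q * (p * N) * (K / N) by field; rewrite gt_eqF.
    by rewrite E1 E2 ltr_pM2r.
  have -> : K * (p * q - p) = q * p * K - K * p by ring.
  lra.
Qed.

End C.


Theorem theorem3 (R : realType) (T : Type) (n : nat) (t : 'I_n -> T)
  (P : pred T) (p : R) (k : nat) (q : R) :
  (0 < n)%N ->
  0 < p -> p <= 1 ->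
  #|[set i : 'I_n | P (t i)]|%:R = p * n%:R ->
  (1 <= k)%N ->
  1 <= q ->
  1 - Omega p q k - Psi p q k <=
  sample_prob R (fun s : {ffun 'I_k -> 'I_n} => qerror (estimate R t P s) (p * n%:R) <= q).
Proof.
move=> n0 p0 p1 hm k1 q1.
have hp : 0 <= p <= 1 by rewrite ltW.
have N0 : (0 : R) < n%:R by rewrite ltr0n.
have K0 : (0 : R) < k%:R by rewrite ltr0n.
have pN1 : 1 <= p * n%:R.
  rewrite -hm ler1n lt0n; apply/negP => /eqP h0.
  move: hm; rewrite h0 => hm.
  have : 0 < p * n%:R by rewrite mulr_gt0.
  by rewrite -hm ltxx.
have q0 : 0 < q by lra.
have d0 : 0 <= p * q - p.
  have : 0 <= p * (q - 1) by rewrite mulr_ge0 // ?subr_ge0 // ltW.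
  by rewrite mulrBr mulr1.
have d'0 : 0 <= p - p / q.
  rewrite subr_ge0 ler_pdivrMr //.
  by rewrite -{1}(mulr1 p) ler_wpM2l // ltW.
pose U := fun s : {ffun 'I_k -> 'I_n} => k%:R * (p * q - p) <= \sum_i ((P (t (s i)))%:R - p).
pose L := fun s : {ffun 'I_k -> 'I_n} => k%:R * (p - p / q) <= \sum_i (p - (P (t (s i)))%:R).
pose Gd := fun s : {ffun 'I_k -> 'I_n} => qerror (estimate R t P s) (p * n%:R) <= q.
have HB : forall s, ~~ Gd s -> U s || L s.
  move=> s hs.
  have E : estimate R t P s = n%:R / k%:R * \sum_i ((P (t (s i)))%:R : R).
    by rewrite /estimate /Xhat (@card_sum R _ (fun i => P (t (s i)))).
  rewrite /Gd E in hs.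
  have := @qerr_fail R n%:R k%:R (\sum_i ((P (t (s i)))%:R : R)) p q N0 K0 pN1 q1 hs.
  rewrite /U /L !sumrB sumr_const card_ord -[p *+ k]mulr_natl.
  by case=> h; apply/orP; [left|right].
have Hcard : (n ^ k <= #|[set s | Gd s]| + #|[set s | U s]| + #|[set s | L s]|)%N.
  have -> : (n ^ k = #|[set: {ffun 'I_k -> 'I_n}]|)%N by rewrite cardsT card_ffun !card_ord.
  apply: leq_trans (subset_leq_card (_ : [set: {ffun 'I_k -> 'I_n}] \subset
      [set s | Gd s] :|: [set s | U s] :|: [set s | L s])) _.
    apply/fintype.subsetP => s _; rewrite !inE.
    by case: (boolP (Gd s)) => //= /HB /orP [] ->; rewrite ?orbT.
  apply: leq_trans (leq_card_setU _ _) _.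
  by rewrite leq_add2r leq_card_setU.
have HA : 1 - sample_prob R U - sample_prob R L <= sample_prob R Gd.
  rewrite /sample_prob.
  have D0 : (0 : R) < (n ^ k)%:R by rewrite ltr0n expn_gt0 n0.
  have Hc : ((n ^ k)%:R : R) <= #|[set s | Gd s]|%:R + #|[set s | U s]|%:R + #|[set s | L s]|%:R.
    by rewrite -!natrD ler_nat.
  have -> : 1 - #|[set s | U s]|%:R / (n ^ k)%:R - #|[set s | L s]|%:R / (n ^ k)%:R
       = ((n ^ k)%:R - #|[set s | U s]|%:R - #|[set s | L s]|%:R) / ((n ^ k)%:R : R).
    by field; rewrite gt_eqF.
  apply: ler_wpM2r; first by rewrite invr_ge0 ltW.
  lra.
have HU : sample_prob R U <= Omega p q k.
  rewrite /Omega !le_min; apply/andP; split; [|apply/andP; split].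
  - apply: le_trans (@up_bound R n k (fun j => P (t j)) p (p * q - p) (ln q) n0 hm (ln_ge0 q1)) _.
    apply: le_trans (@pow_le R k _ _ _ (@chern_up_step R p q q1)) _.
      by rewrite mulr_ge0 ?expR_ge0 //; exact: G_ge0.
    by rewrite omega1E // mulrC.
  - have [l l0 hl] := @bern_step R p (p * q - p) hp d0.
    apply: le_trans (@up_bound R n k (fun j => P (t j)) p (p * q - p) l n0 hm l0) _.
    apply: le_trans (@pow_le R k _ _ _ hl) _.
      by rewrite mulr_ge0 ?expR_ge0 //; exact: G_ge0.
    rewrite /sigma2 ler_expR le_eqVlt; apply/orP; left; apply/eqP; ring.
  - have l0 : 0 <= 4 * (p * q - p) by rewrite mulr_ge0.
    apply: le_trans (@up_bound R n k (fun j => P (t j)) p (p * q - p) _ n0 hm l0) _.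
    apply: le_trans (@pow_le R k _ _ _ (@hoeff_step R p _ hp d0)) _.
      by rewrite mulr_ge0 ?expR_ge0 //; exact: G_ge0.
    rewrite ler_expR le_eqVlt; apply/orP; left; apply/eqP; ring.
have hp' : 0 <= 1 - p <= 1 by apply/andP; split; lra.
have HL1 : sample_prob R L <= (expR (q^-1 - 1) * q `^ (q^-1)) `^ (p * k%:R).
  apply: le_trans (@lo_bound R n k (fun j => P (t j)) p (p - p / q) (ln q) n0 hm (ln_ge0 q1)) _.
  apply: le_trans (@pow_le R k _ _ _ (@chern_lo_step R p q q1)) _.
    by rewrite mulr_ge0 ?expR_ge0 //; exact: G_ge0.
  by rewrite psi1E // mulrC.
have HL2 : sample_prob R L <= expR (- (k%:R * (p - p / q) ^+ 2)
                  / (2 * sigma2 p + 2 * (p - p / q) / 3)).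
  have [l l0 hl] := @bern_step R (1 - p) (p - p / q) hp' d'0.
  apply: le_trans (@lo_bound R n k (fun j => P (t j)) p (p - p / q) l n0 hm l0) _.
  apply: le_trans (@pow_le R k _ _ _ hl) _.
    by rewrite mulr_ge0 ?expR_ge0 //; exact: G_ge0.
  have -> : (1 - p) * (1 - (1 - p)) = sigma2 p by rewrite /sigma2; ring.
  rewrite ler_expR le_eqVlt; apply/orP; left; apply/eqP; ring.
have HP : sample_prob R L <= Psi p q k.
  rewrite /Psi; case: ifP => hpq; rewrite !le_min HL1 HL2 //=.
  have l0 : 0 <= 4 * (p - p / q) by rewrite mulr_ge0.
  apply: le_trans (@lo_bound R n k (fun j => P (t j)) p (p - p / q) _ n0 hm l0) _.
  apply: le_trans (@pow_le R k _ _ _ (@hoeff_step R (1 - p) _ hp' d'0)) _.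
    by rewrite mulr_ge0 ?expR_ge0 //; exact: G_ge0.
  rewrite ler_expR.
  have E1 : - (2 * k%:R * (p * q - 1) ^+ 2) / q ^+ 2 = k%:R * (- (2 * ((p * q - 1) / q) ^+ 2)).
    by field; rewrite gt_eqF.
  rewrite E1.
  apply: ler_wpM2l; first exact: ltW.
  rewrite lerN2; apply: ler_wpM2l => //.
  have hpq' : 1 < p * q by rewrite hpq.
  have E2 : p - p / q = (p * q - p) / q by field; rewrite gt_eqF.
  rewrite E2; apply: lerXn2r.
  - by rewrite nnegrE divr_ge0 ?ltW //; lra.
  - by rewrite nnegrE divr_ge0 // ltW.
  rewrite ler_pM2r ?invr_gt0 //; lra.
have -> : (fun s : {ffun 'I_k -> 'I_n} => qerror (estimate R t P s) (p * n%:R) <= q) = Gd by [].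
lra.
Qed.
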